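(* Let $A,B$ be idempotent torsion-free $\Gamma$-graded rings and let $F:A\text{-gr}\to B\text{-gr}$, $G:B\text{-gr}\to A\text{-gr}$ be inverse graded category equivalences. If $S\in A\text{-gr}$ is graded simple (resp. graded semisimple), then $F(S)$ is graded simple (resp. graded semisimple) in $B\text{-gr}$.
   Context: $\Gamma$ is a fixed multiplicative group. Rings are associative $\Gamma$-graded, not necessarily unital; $A$ is idempotent if $A^2=A$ and torsion-free if $Aa=0\Rightarrow a=0$ and $aA=0\Rightarrow a=0$. $A\text{-gr}$: unital ($AM=M$), torsion-free ($Am=0\Rightarrow m=0$) graded left $A$-modules with degree-preserving maps. A graded functor is an additive functor commuting with suspensions ($M(\sigma)_\tau=M_{\tau\sigma}$); a graded category equivalence is a graded functor which is an equivalence. A graded module $S\neq0$ is graded simple if its only graded submodules are $0$ and $S$; it is graded semisimple if it is a direct sum of graded simple modules. *)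

(* Defs.v *)
From HB Require Import structures.
From mathcomp Require Import all_boot all_algebra.
From Stdlib Require List.
Set Implicit Arguments. Unset Strict Implicit. Unset Printing Implicit Defensive.
Import GRing.Theory.
Local Open Scope ring_scope.

Record group := Group {
  gcar :> Type;
  gmul : gcar -> gcar -> gcar;
  gone : gcar;
  ginv : gcar -> gcar;
  gmulA : forall x y z, gmul x (gmul y z) = gmul (gmul x y) z;
  gmul1g : forall x, gmul gone x = x;
  gmulg1 : forall x, gmul x gone = x;
  gmulVg : forall x, gmul (ginv x) x = gone;
  gmulgV : forall x, gmul x (ginv x) = gone }.

(* pi g is the projection onto the degree-g component; the conditions say
   V = (+)_g V_g with V_g = image of pi g (orthogonal idempotent additive
   projections whose images span V). *)
Definition grading (Γ : group) (V : zmodType) (pi : Γ -> V -> V) : Prop :=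
  [/\ forall g x y, pi g (x + y) = pi g x + pi g y,
      forall g x, pi g (pi g x) = pi g x,
      forall g h x, g <> h -> pi g (pi h x) = 0 &
      forall x, exists s : seq Γ, x = \sum_(g <- s) pi g x].

Record gring (Γ : group) := GRingR {
  rcar :> zmodType;
  rmul : rcar -> rcar -> rcar;
  rpi : Γ -> rcar -> rcar;
  rmulDl : forall x y z, rmul (x + y) z = rmul x z + rmul y z;
  rmulDr : forall x y z, rmul x (y + z) = rmul x y + rmul x z;
  rmulA : forall x y z, rmul x (rmul y z) = rmul (rmul x y) z;
  rgrading : grading rpi;
  rmul_hom : forall g h x y,
    rpi (gmul g h) (rmul (rpi g x) (rpi h y)) = rmul (rpi g x) (rpi h y) }.

Definition idempotent_ring Γ (A : gring Γ) : Prop :=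
  forall a : A, exists s : seq (A * A), a = \sum_(p <- s) rmul p.1 p.2.

Definition torsionfree_ring Γ (A : gring Γ) : Prop :=
  (forall a : A, (forall b : A, rmul b a = 0) -> a = 0) /\
  (forall a : A, (forall b : A, rmul a b = 0) -> a = 0).

(* Objects of A-gr: unital, torsion-free graded left A-modules. *)
Record gmod Γ (A : gring Γ) := GMod {
  mcar :> zmodType;
  act : A -> mcar -> mcar;
  mpi : Γ -> mcar -> mcar;
  actDl : forall a b m, act (a + b) m = act a m + act b m;
  actDr : forall a m n, act a (m + n) = act a m + act a n;
  actA : forall a b m, act (rmul a b) m = act a (act b m);
  mgrading : grading mpi;
  act_hom : forall g h a m,
    mpi (gmul g h) (act (@rpi Γ A g a) (mpi h m)) = act (@rpi Γ A g a) (mpi h m);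
  munital : forall m, exists s : seq (A * mcar), m = \sum_(p <- s) act p.1 p.2;
  mtorsionfree : forall m, (forall a, act a m = 0) -> m = 0 }.

Record ghom Γ (A : gring Γ) (M N : gmod A) := GHom {
  hfun :> M -> N;
  hfunD : forall x y, hfun (x + y) = hfun x + hfun y;
  hfunA : forall a x, hfun (act a x) = act a (hfun x);
  hfunP : forall g x, hfun (mpi g x) = mpi g (hfun x) }.

Section Homs.
Variables (Γ : group) (A : gring Γ).

Lemma mpiD (M : gmod A) g (x y : M) : mpi g (x + y) = mpi g x + mpi g y.
Proof. by case: (mgrading M) => H _ _ _; apply: H. Qed.

Definition hid (M : gmod A) : ghom M M :=
  @GHom Γ A M M (fun x => x) (fun _ _ => erefl) (fun _ _ => erefl) (fun _ _ => erefl).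

Definition hcomp (M N P : gmod A) (g : ghom N P) (f : ghom M N) : ghom M P.
Proof.
refine (@GHom Γ A M P (fun x => g (f x)) _ _ _).
- by move=> x y; rewrite !hfunD.
- by move=> a x; rewrite !hfunA.
- by move=> h x; rewrite !hfunP.
Defined.

Definition hplus (M N : gmod A) (f g : ghom M N) : ghom M N.
Proof.
refine (@GHom Γ A M N (fun x => f x + g x) _ _ _).
- by move=> x y; rewrite !hfunD addrACA.
- by move=> a x; rewrite !hfunA actDr.
- by move=> h x; rewrite !hfunP mpiD.
Defined.

Definition is_iso (M N : gmod A) (f : ghom M N) : Prop :=
  exists g : ghom N M, hcomp g f = hid M /\ hcomp f g = hid N.

(* Suspension M(sigma): M(sigma)_tau = M_(tau sigma). *)
Lemma shift_grading (M : gmod A) (s : Γ) :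
  grading (fun t => @mpi Γ A M (gmul t s)).
Proof.
case: (mgrading M) => H1 H2 H3 H4; split.
- by move=> g x y; apply: H1.
- by move=> g x; apply: H2.
- move=> g h x gh; apply: H3 => E; apply: gh.
  by rewrite -(gmulg1 g) -(gmulgV s) gmulA E -gmulA gmulgV gmulg1.
- move=> x; case: (H4 x) => l Hl; exists (map (fun g => gmul g (ginv s)) l).
  by rewrite big_map; under eq_bigr => g _ do rewrite -gmulA gmulVg gmulg1.
Qed.

Lemma shift_act_hom (M : gmod A) (s : Γ) g h a (m : M) :
  mpi (gmul (gmul g h) s) (act (@rpi Γ A g a) (mpi (gmul h s) m))
  = act (@rpi Γ A g a) (mpi (gmul h s) m).
Proof. by rewrite -gmulA act_hom. Qed.

Definition shift (s : Γ) (M : gmod A) : gmod A :=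
  @GMod Γ A M (@act Γ A M) (fun t => mpi (gmul t s))
    (@actDl Γ A M) (@actDr Γ A M) (@actA Γ A M) (shift_grading M s)
    (@shift_act_hom M s) (@munital Γ A M) (@mtorsionfree Γ A M).

Definition shift_hom (s : Γ) (M N : gmod A) (f : ghom M N) :
  ghom (shift s M) (shift s N) :=
  @GHom Γ A (shift s M) (shift s N) f (@hfunD Γ A M N f) (@hfunA Γ A M N f)
    (fun t x => @hfunP Γ A M N f (gmul t s) x).

End Homs.

Record gfunctor Γ (A B : gring Γ) := GFunctor {
  fobj :> gmod A -> gmod B;
  fhom : forall M N : gmod A, ghom M N -> ghom (fobj M) (fobj N);
  fhom_id : forall M, fhom (hid M) = hid (fobj M);
  fhom_comp : forall (M N P : gmod A) (g : ghom N P) (f : ghom M N),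
    fhom (hcomp g f) = hcomp (fhom g) (fhom f);
  fhom_add : forall (M N : gmod A) (f g : ghom M N),
    fhom (hplus f g) = hplus (fhom f) (fhom g) }.

Definition graded_functor Γ (A B : gring Γ) (F : gfunctor A B) : Prop :=
  forall s : Γ, exists eta : forall M : gmod A, ghom (F (shift s M)) (shift s (F M)),
    (forall M, is_iso (eta M)) /\
    (forall (M N : gmod A) (f : ghom M N),
       hcomp (eta N) (fhom F (shift_hom s f)) = hcomp (shift_hom s (fhom F f)) (eta M)).

Definition comp_iso_id Γ (A B : gring Γ) (F : gfunctor A B) (G : gfunctor B A) : Prop :=
  exists eta : forall M : gmod A, ghom (G (F M)) M,
    (forall M, is_iso (eta M)) /\
    (forall (M N : gmod A) (f : ghom M N),
       hcomp (eta N) (fhom G (fhom F f)) = hcomp f (eta M)).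

Definition inverse_equivalences Γ (A B : gring Γ) (F : gfunctor A B) (G : gfunctor B A) :=
  comp_iso_id F G /\ comp_iso_id G F.

Definition gr_submod Γ (A : gring Γ) (M : gmod A) (P : M -> Prop) : Prop :=
  [/\ P 0, forall x y, P x -> P y -> P (x + y), forall x, P x -> P (- x),
      forall a x, P x -> P (act a x) & forall g x, P x -> P (mpi g x)].

Definition gr_simple_sub Γ (A : gring Γ) (M : gmod A) (N : M -> Prop) : Prop :=
  (exists x, N x /\ x <> 0) /\
  (forall P, gr_submod P -> (forall x, P x -> N x) ->
     (forall x, P x -> x = 0) \/ (forall x, N x -> P x)).

Definition gr_simple Γ (A : gring Γ) (M : gmod A) : Prop :=
  gr_simple_sub (fun _ : M => True).

Definition gr_semisimple Γ (A : gring Γ) (M : gmod A) : Prop :=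
  exists (I : Type) (N : I -> M -> Prop),
    (forall i, gr_submod (N i) /\ gr_simple_sub (N i)) /\
    (forall x : M, exists s : seq (I * M),
        List.Forall (fun p => N p.1 p.2) s /\ x = \sum_(p <- s) p.2) /\
    (forall i (x : M), N i x ->
       (exists s : seq (I * M),
          List.Forall (fun p => p.1 <> i /\ N p.1 p.2) s /\ x = \sum_(p <- s) p.2) ->
       x = 0).

(* Main.v *)
From Pilot Require Import Defs.
From HB Require Import structures.
From mathcomp Require Import all_boot all_algebra.
From Stdlib Require Import ClassicalEpsilon Classical FunctionalExtensionality ProofIrrelevance.
Import Pilot.Defs.
Set Implicit Arguments. Unset Strict Implicit. Unset Printing Implicit Defensive.
Import GRing.Theory.
Local Open Scope ring_scope.

Definition pb (Q : Prop) : bool := if excluded_middle_informative Q then true else false.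
Lemma pbP Q : reflect Q (pb Q).
Proof. rewrite /pb; case: excluded_middle_informative => h; by constructor. Qed.
Definition zcl (M : zmodType) (P : M -> Prop) :=
  [/\ P 0, (forall x y, P x -> P y -> P (x+y)) & (forall x, P x -> P (-x))].

Section SubZ.
Variables (M : zmodType) (P : M -> Prop) (HP : zcl P).
Definition subT := (fun _ : zcl P => {x : M | pb (P x)}) HP.
HB.instance Definition _ := Choice.on subT.
Lemma subP (x : subT) : P (val x). Proof. exact: (elimT (pbP _) (valP x)). Qed.
Definition mkS x (h : P x) : subT := exist _ x (introT (pbP _) h).
Definition sadd (x y : subT) : subT := mkS (let: And3 _ H _ := HP in H _ _ (subP x) (subP y)).
Definition sopp (x : subT) : subT := mkS (let: And3 _ _ H := HP in H _ (subP x)).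
Definition szero : subT := mkS (let: And3 H _ _ := HP in H).
Lemma saddA : associative sadd. Proof. by move=> x y z; apply: val_inj; rewrite /= addrA. Qed.
Lemma saddC : commutative sadd. Proof. by move=> x y; apply: val_inj; rewrite /= addrC. Qed.
Lemma sadd0 : left_id szero sadd. Proof. by move=> x; apply: val_inj; rewrite /= add0r. Qed.
Lemma saddN : left_inverse szero sopp sadd. Proof. by move=> x; apply: val_inj; rewrite /= addNr. Qed.
HB.instance Definition _ := GRing.isZmodule.Build subT saddA saddC sadd0 saddN.
Lemma valD (x y : subT) : val (x + y) = val x + val y. Proof. by []. Qed.
Lemma val0 : val (0 : subT) = 0. Proof. by []. Qed.
Lemma val_sum (T : Type) (s : seq T) (f : T -> subT) :
  val (\sum_(p <- s) f p) = \sum_(p <- s) val (f p).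
Proof. by apply: (big_morph val valD val0). Qed.
End SubZ.

Lemma xx0 (V : zmodType) (x : V) : x = x + x -> x = 0.
Proof. move=> h; have E : x + x - x = x - x by rewrite -h. by move: E; rewrite addrK subrr. Qed.

Section Basic.
Variables (Γ : group) (A : gring Γ).
Implicit Types M N X Y : gmod A.

Lemma mpi0 M (g : Γ) : mpi g (0 : M) = 0.
Proof. apply: xx0; by rewrite -mpiD addr0. Qed.
Lemma act0r M a : act a (0 : M) = 0.
Proof. apply: xx0; by rewrite -actDr addr0. Qed.
Lemma act0l M (m : M) : act 0 m = 0.
Proof. apply: xx0; by rewrite -actDl addr0. Qed.
Lemma actNl M a (m : M) : act (- a) m = - act a m.
Proof. apply/eqP; rewrite -subr_eq0 opprK -actDl addNr act0l //. Qed.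
Lemma mpi_sum M (g : Γ) T (s : seq T) (f : T -> M) :
  mpi g (\sum_(p <- s) f p) = \sum_(p <- s) mpi g (f p).
Proof. by apply: (big_morph (mpi g) (@mpiD _ _ M g) (mpi0 M g)). Qed.
Lemma act_sumr M a T (s : seq T) (f : T -> M) :
  act a (\sum_(p <- s) f p) = \sum_(p <- s) act a (f p).
Proof. by apply: (big_morph (act a) (@actDr _ _ M a) (act0r M a)). Qed.
Lemma act_suml M (m : M) T (s : seq T) (f : T -> A) :
  act (\sum_(p <- s) f p) m = \sum_(p <- s) act (f p) m.
Proof. elim: s => [|x s IH]; rewrite ?big_nil ?big_cons ?act0l // actDl IH //. Qed.
Lemma mpi_idem M (g : Γ) (x : M) : mpi g (mpi g x) = mpi g x.
Proof. by case: (mgrading M) => _ H _ _; apply: H. Qed.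
Lemma mpi_orth M (g h : Γ) (x : M) : g <> h -> mpi g (mpi h x) = 0.
Proof. by case: (mgrading M) => _ _ H _; apply: H. Qed.
Lemma mpi_dec M (x : M) : exists s : seq Γ, x = \sum_(g <- s) mpi g x.
Proof. by case: (mgrading M) => _ _ _ H; apply: H. Qed.
Lemma rpi_dec (a : A) : exists s : seq Γ, a = \sum_(g <- s) rpi g a.
Proof. by case: (rgrading A) => _ _ _ H; apply: H. Qed.

Lemma hfun0 M N (f : ghom M N) : f 0 = 0.
Proof. apply: xx0; by rewrite -hfunD addr0. Qed.
Lemma hfunN M N (f : ghom M N) x : f (- x) = - f x.
Proof. apply/eqP; rewrite -subr_eq0 opprK -hfunD addNr hfun0 //. Qed.
Lemma hfun_sum M N (f : ghom M N) T (s : seq T) (F : T -> M) :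
  f (\sum_(p <- s) F p) = \sum_(p <- s) f (F p).
Proof. by apply: (big_morph f (@hfunD _ _ M N f) (hfun0 f)). Qed.

Lemma ghom_ext M N (f g : ghom M N) : (forall x, f x = g x) -> f = g.
Proof.
case: f g => [f fD fA fP] [g gD gA gP] /= H.
have E : f = g := functional_extensionality _ _ H.
subst g; f_equal; apply: proof_irrelevance.
Qed.

Lemma iso_inj M N (f : ghom M N) : is_iso f -> injective f.
Proof.
case=> g [H1 _] x y E.
have := congr1 (fun h : ghom M M => h x) H1; have := congr1 (fun h : ghom M M => h y) H1.
by rewrite /= E => -> ->.
Qed.
Lemma iso_surj M N (f : ghom M N) : is_iso f -> forall y, exists x, f x = y.
Proof.
case=> g [_ H2] y; exists (g y).
by have := congr1 (fun h : ghom N N => h y) H2.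
Qed.

Definition im X M (f : ghom X M) (y : M) := exists x, f x = y.

End Basic.

Definition unital_sub Γ (A : gring Γ) (M : gmod A) (P : M -> Prop) :=
  forall x, P x -> exists s : seq (A * M),
    List.Forall (fun p => P p.2) s /\ x = \sum_(p <- s) act p.1 p.2.

Section SubMod.
Variables (Γ : group) (A : gring Γ) (M : gmod A) (P : M -> Prop).
Hypotheses (HP : gr_submod P) (HU : unital_sub P).

Lemma zcl_of : zcl P.
Proof. by case: HP => *; split. Qed.
Definition sT := subT zcl_of.
Lemma Pact a (x : M) : P x -> P (act a x). Proof. by case: HP => _ _ _ H _; apply: H. Qed.
Lemma Pmpi (g : Γ) (x : M) : P x -> P (mpi g x). Proof. by case: HP => _ _ _ _ H; apply: H. Qed.
Definition sact (a : A) (x : sT) : sT := mkS zcl_of (Pact a (@subP _ _ zcl_of x)).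
Definition smpi (g : Γ) (x : sT) : sT := mkS zcl_of (Pmpi g (@subP _ _ zcl_of x)).

Lemma sactDl a b m : sact (a + b) m = sact a m + sact b m.
Proof. by apply: val_inj; rewrite /= actDl. Qed.
Lemma sactDr a m n : sact a (m + n) = sact a m + sact a n.
Proof. by apply: val_inj; rewrite /= actDr. Qed.
Lemma sactA a b m : sact (rmul a b) m = sact a (sact b m).
Proof. by apply: val_inj; rewrite /= actA. Qed.
Lemma sgrading : grading smpi.
Proof.
split.
- by move=> g x y; apply: val_inj; rewrite /= mpiD.
- by move=> g x; apply: val_inj; rewrite /= mpi_idem.
- by move=> g h x gh; apply: val_inj; rewrite /= mpi_orth.
- move=> x; case: (mpi_dec (val x)) => s Hs; exists s; apply: val_inj.
  by rewrite val_sum.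
Qed.
Lemma sact_hom g h a m :
  smpi (gmul g h) (sact (rpi g a) (smpi h m)) = sact (rpi g a) (smpi h m).
Proof. by apply: val_inj; rewrite /= act_hom. Qed.
Lemma sunital_aux (s : seq (A * M)) : List.Forall (fun p => P p.2) s ->
  exists s' : seq (A * sT), \sum_(p <- s) act p.1 p.2 = val (\sum_(p <- s') sact p.1 p.2).
Proof.
elim=> [|p s0 Hp _ [s' IH]]; first by exists [::]; rewrite !big_nil.
exists ((p.1, mkS zcl_of Hp) :: s'); rewrite !big_cons valD IH //.
Qed.
Lemma sunital m : exists s : seq (A * sT), m = \sum_(p <- s) sact p.1 p.2.
Proof.
case: (HU (@subP _ _ zcl_of m)) => s [Hs E]; case: (sunital_aux Hs) => s' E'.
by exists s'; apply: val_inj; rewrite E -E'.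
Qed.
Lemma storsion m : (forall a, sact a m = 0) -> m = 0.
Proof.
move=> H; apply: val_inj; apply: mtorsionfree => a.
by have := congr1 val (H a).
Qed.

Definition subM : gmod A :=
  @GMod Γ A sT sact smpi sactDl sactDr sactA sgrading sact_hom sunital storsion.

Definition incl : ghom subM M :=
  @GHom Γ A subM M (fun x => val x) (fun _ _ => erefl) (fun _ _ => erefl) (fun _ _ => erefl).

Lemma incl_inj : injective incl.
Proof. move=> x y; exact: val_inj. Qed.
Lemma incl_im y : im incl y <-> P y.
Proof.
split; first by case=> x <-; exact: (@subP _ _ zcl_of).
by move=> Py; exists (mkS zcl_of Py).
Qed.
End SubMod.

Lemma Forall_sum (V : zmodType) (H : V -> Prop) (T : Type) (R : T -> Prop) (f : T -> V)
  (s : seq T) : H 0 -> (forall x y, H x -> H y -> H (x + y)) ->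
  List.Forall R s -> (forall p, R p -> H (f p)) -> H (\sum_(p <- s) f p).
Proof.
move=> H0 HD; elim=> [|p s0 Hp _ IH] Hf; first by rewrite big_nil.
by rewrite big_cons; apply: HD; [apply: Hf | apply: IH].
Qed.
Lemma Forall_map (T U : Type) (f : T -> U) (P : T -> Prop) (Q : U -> Prop) s :
  (forall x, P x -> Q (f x)) -> List.Forall P s -> List.Forall Q (map f s).
Proof. move=> H; elim=> [|x s0 Hx _ IH] /=; constructor; auto. Qed.
Lemma Forall_cat (T : Type) (P : T -> Prop) s1 s2 :
  List.Forall P s1 -> List.Forall P s2 -> List.Forall P (s1 ++ s2).
Proof. move=> H1 H2; elim: H1 => [|x s0 Hx _ IH] //=; constructor; auto. Qed.
Lemma Forall_impl' (T : Type) (P Q : T -> Prop) s :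
  (forall x, P x -> Q x) -> List.Forall P s -> List.Forall Q s.
Proof. move=> H; elim=> [|x s0 Hx _ IH]; constructor; auto. Qed.

Section AP.
Variables (Γ : group) (A : gring Γ) (idA : idempotent_ring A).
Implicit Types M N X Y : gmod A.

Definition AP M (P : M -> Prop) (x : M) :=
  exists s : seq (A * M),
    List.Forall (fun p => P p.2 /\ exists k, mpi k p.2 = p.2) s /\ x = \sum_(p <- s) act p.1 p.2.

Lemma im_submod X M (f : ghom X M) : gr_submod (im f).
Proof.
split.
- by exists 0; rewrite hfun0.
- by move=> _ _ [x <-] [y <-]; exists (x + y); rewrite hfunD.
- by move=> _ [x <-]; exists (- x); rewrite hfunN.
- by move=> a _ [x <-]; exists (act a x); rewrite hfunA.
- by move=> g _ [x <-]; exists (mpi g x); rewrite hfunP.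
Qed.

Section APM.
Variables (M : gmod A) (P : M -> Prop) (HP : gr_submod P).

Lemma AP0 : AP P 0. Proof. by exists [::]; rewrite big_nil. Qed.
Lemma APD x y : AP P x -> AP P y -> AP P (x + y).
Proof.
case=> s1 [H1 ->] [s2 [H2 ->]]; exists (s1 ++ s2); split; first exact: Forall_cat.
by rewrite big_cat.
Qed.
Lemma AP_single a m k : P m -> mpi k m = m -> AP P (act a m).
Proof.
move=> Pm Hk; exists [:: (a, m)]; split; last by rewrite big_seq1.
constructor; [split; [exact: Pm | by exists k] | constructor].
Qed.
Lemma AP_sum T (R : T -> Prop) (f : T -> M) s :
  List.Forall R s -> (forall p, R p -> AP P (f p)) -> AP P (\sum_(p <- s) f p).
Proof. by apply: Forall_sum; [exact: AP0 | exact: APD]. Qed.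
Lemma AP_sum' T (f : T -> M) s :
  (forall p, AP P (f p)) -> AP P (\sum_(p <- s) f p).
Proof.
move=> H; apply: (@AP_sum T (fun _ => True)) => //.
by elim: s => [|x s IH]; constructor.
Qed.
Lemma APN x : AP P x -> AP P (- x).
Proof.
case=> s [Hs ->]; exists (map (fun p => (- p.1, p.2)) s); split.
  by apply: Forall_map Hs.
by rewrite big_map -sumrN; apply: eq_bigr => p _; rewrite actNl.
Qed.
Lemma AP_act a x : AP P x -> AP P (act a x).
Proof.
case=> s [Hs ->]; exists (map (fun p => (rmul a p.1, p.2)) s); split.
  by apply: Forall_map Hs.
by rewrite big_map act_sumr; apply: eq_bigr => p _; rewrite actA.
Qed.
Lemma Psum T (R : T -> Prop) (f : T -> M) s :
  List.Forall R s -> (forall p, R p -> P (f p)) -> P (\sum_(p <- s) f p).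
Proof. by case: HP => H0 HD _ _ _; apply: Forall_sum. Qed.
Lemma AP_subP x : AP P x -> P x.
Proof.
case=> s [Hs ->]; apply: (Psum (f := fun p => act p.1 p.2) Hs) => p [Hp _].
by case: HP => _ _ _ H _; apply: H.
Qed.
Lemma AP_mpi_single g a m k : P m -> mpi k m = m -> AP P (mpi g (act a m)).
Proof.
move=> Pm Hk; case: (rpi_dec a) => s ->; rewrite act_suml mpi_sum.
apply: AP_sum' => h.
rewrite -Hk -act_hom.
case: (classic (g = gmul h k)) => [->|ne].
  rewrite mpi_idem act_hom Hk; exact: AP_single Pm Hk.
rewrite mpi_orth //; exact: AP0.
Qed.
Lemma AP_mpi g x : AP P x -> AP P (mpi g x).
Proof.
case=> s [Hs ->]; rewrite mpi_sum; apply: (AP_sum (f := fun p => mpi g (act p.1 p.2)) Hs) => p [Hp [k Hk]].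
exact: AP_mpi_single Hp Hk.
Qed.
Lemma AP_submod : gr_submod (AP P).
Proof. split; [exact: AP0 | exact: APD | exact: APN | exact: AP_act | exact: AP_mpi]. Qed.

Definition UAP (x : M) := exists s : seq (A * M),
    List.Forall (fun p => AP P p.2) s /\ x = \sum_(p <- s) act p.1 p.2.
Lemma UAP0 : UAP 0. Proof. by exists [::]; rewrite big_nil. Qed.
Lemma UAPD x y : UAP x -> UAP y -> UAP (x + y).
Proof.
case=> s1 [H1 ->] [s2 [H2 ->]]; exists (s1 ++ s2); split; first exact: Forall_cat.
by rewrite big_cat.
Qed.
Lemma UAP_sum' T (f : T -> M) s : (forall p, UAP (f p)) -> UAP (\sum_(p <- s) f p).
Proof.
move=> H; apply: (@Forall_sum _ _ T (fun _ => True)) => //; [exact: UAP0 | exact: UAPD|].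
by elim: s => [|x s IH]; constructor.
Qed.
Lemma AP_unital : unital_sub (AP P).
Proof.
move=> x Hx; suff: UAP x by [].
case: Hx => s [Hs ->]; apply: (@Forall_sum _ _ _ _ _ _ UAP0 UAPD Hs) => p [Pp [k Hk]].
case: (idA p.1) => t ->; rewrite act_suml; apply: UAP_sum' => q.
rewrite actA; case: (rpi_dec q.2) => sc ->; rewrite act_suml act_sumr.
apply: UAP_sum' => h.
exists [:: (q.1, act (rpi h q.2) p.2)]; rewrite big_seq1; split => //.
constructor; last constructor.
rewrite -Hk; exists [:: (rpi h q.2, mpi k p.2)]; rewrite big_seq1; split => //.
constructor; last constructor; split; first by rewrite Hk.
by exists k; rewrite mpi_idem.
Qed.

Lemma AP_nonzero x : P x -> x <> 0 -> exists y, AP P y /\ y <> 0.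
Proof.
move=> Px nx; case: (mpi_dec x) => s Es.
have [k nk] : exists k, mpi k x <> 0.
  apply: NNPP => H; apply: nx; rewrite Es big1 // => g _.
  by apply: NNPP => H'; apply: H; exists g.
have [a na] : exists a, act a (mpi k x) <> 0.
  apply: NNPP => H; apply: nk; apply: mtorsionfree => a.
  by apply: NNPP => H'; apply: H; exists a.
exists (act a (mpi k x)); split => //.
apply: AP_single; [exact: Pmpi | exact: mpi_idem].
Qed.

Lemma im_AP X (f : ghom X M) : (forall y, im f y -> P y) -> forall y, im f y -> AP P y.
Proof.
move=> H _ [x <-]; case: (munital x) => s ->.
rewrite hfun_sum; apply: AP_sum' => p; rewrite hfunA.
case: (mpi_dec p.2) => t ->; rewrite hfun_sum act_sumr; apply: AP_sum' => k.
rewrite hfunP; apply: AP_single; last exact: mpi_idem.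
apply: Pmpi => //; apply: H; by exists p.2.
Qed.
End APM.

Lemma AP_mono M (P Q : M -> Prop) : (forall x, P x -> Q x) -> forall x, AP P x -> AP Q x.
Proof.
move=> H x [s [Hs ->]]; exists s; split => //; apply: Forall_impl' Hs => p [Pp Hk].
by split; [apply: H|].
Qed.

End AP.

Lemma factor Γ (A : gring Γ) (X Y M : gmod A) (α : ghom X M) (β : ghom Y M) :
  injective β -> (forall x, exists y, α x = β y) ->
  exists k : ghom X Y, forall x, α x = β (k x).
Proof.
move=> bi H.
pose k x := proj1_sig (constructive_indefinite_description _ (H x)).
have kP x : α x = β (k x) := proj2_sig (constructive_indefinite_description _ (H x)).
have kD x y : k (x + y) = k x + k y.
  by apply: bi; rewrite -kP hfunD hfunD -!kP.
have kA a x : k (act a x) = act a (k x).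
  by apply: bi; rewrite -kP hfunA hfunA -kP.
have kM g x : k (mpi g x) = mpi g (k x).
  by apply: bi; rewrite -kP hfunP hfunP -kP.
by exists (GHom kD kA kM).
Qed.

Section Fun.
Variables (Γ : group) (A B : gring Γ) (F : gfunctor A B).

Lemma F_zero M N (f : ghom M N) : (forall x, f x = 0) -> forall y, fhom F f y = 0.
Proof.
move=> H y.
have E : hplus f f = f by apply: ghom_ext => x /=; rewrite H addr0.
have := congr1 (fun h => hfun h y) (fhom_add F f f).
by rewrite E /= => e; apply: xx0.
Qed.

Lemma F_im X Y M (α : ghom X M) (β : ghom Y M) : injective β ->
  (forall x, exists y, α x = β y) -> forall x, exists y, fhom F α x = fhom F β y.
Proof.
move=> bi H; case: (factor bi H) => k Hk.
have E : α = hcomp β k by apply: ghom_ext.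
by move=> x; exists (fhom F k x); rewrite E fhom_comp.
Qed.
End Fun.

Section EqBasic.
Variables (Γ : group) (A B : gring Γ) (F : gfunctor A B) (G : gfunctor B A).
Variables (eta : forall M : gmod A, ghom (G (F M)) M) (eta' : forall N : gmod B, ghom (F (G N)) N).
Hypotheses (Hi : forall M, is_iso (eta M))
  (Hn : forall (M N : gmod A) (f : ghom M N),
       hcomp (eta N) (fhom G (fhom F f)) = hcomp f (eta M))
  (Hi' : forall N, is_iso (eta' N))
  (Hn' : forall (M N : gmod B) (f : ghom M N),
       hcomp (eta' N) (fhom F (fhom G f)) = hcomp f (eta' M)).
Hypothesis (idB : idempotent_ring B).

Lemma natpt M N (f : ghom M N) x : eta N (fhom G (fhom F f) x) = f (eta M x).
Proof. exact: (congr1 (fun h => hfun h x) (Hn f)). Qed.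
Lemma natpt' M N (f : ghom M N) x : eta' N (fhom F (fhom G f) x) = f (eta' M x).
Proof. exact: (congr1 (fun h => hfun h x) (Hn' f)). Qed.

Lemma nonzero_pres (M : gmod A) : (exists x : M, x <> 0) -> exists y : F M, y <> 0.
Proof.
case=> x nx; apply: NNPP => Hy; apply: nx.
have Z : forall y : F M, hid (F M) y = 0.
  by move=> y; apply: NNPP => ny; apply: Hy; exists y.
have Z1 := F_zero (F:=G) Z; rewrite fhom_id in Z1.
case: (iso_surj (Hi M) x) => w <-.
have Ew : w = 0 by exact: (Z1 w).
by rewrite Ew hfun0.
Qed.

Lemma inj_pres X Y (β : ghom X Y) : injective β -> injective (fhom F β).
Proof.
move=> bi u v e; apply/eqP; rewrite -subr_eq0; apply/eqP.
have w0 : fhom F β (u - v) = 0 by rewrite hfunD hfunN e subrr.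
apply: NNPP => nw.
pose K := fun z : F X => fhom F β z = 0.
have HK : gr_submod K.
  split; rewrite /K.
  - exact: hfun0.
  - by move=> x y hx hy; rewrite hfunD hx hy addr0.
  - by move=> x hx; rewrite hfunN hx oppr0.
  - by move=> a x hx; rewrite hfunA hx act0r.
  - by move=> g x hx; rewrite hfunP hx mpi0.
case: (AP_nonzero HK w0 nw) => y [Ay ny].
pose j := incl (AP_submod K) (AP_unital idB (P:=K)).
have j0 : forall q, hcomp (fhom F β) j q = 0.
  move=> q; apply: (AP_subP HK); apply/(incl_im (AP_submod K) (AP_unital idB (P:=K))).
  by exists q.
have Gj0 : forall z, fhom G j z = 0.
  move=> z; have h2 := F_zero (F:=G) j0 z; rewrite fhom_comp /= in h2.
  apply: (iso_inj (Hi X)); rewrite hfun0; apply: bi; rewrite hfun0 -natpt h2 hfun0 //.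
have Jz : forall q, j q = 0.
  move=> q; case: (iso_surj (Hi' _) q) => t <-.
  by rewrite -natpt' (F_zero (F:=F) Gj0 t) hfun0.
case: (proj2 (incl_im (AP_submod K) (AP_unital idB (P:=K)) y) Ay) => q Eq.
by apply: ny; rewrite -Eq Jz.
Qed.
End EqBasic.

Section Main.
Variables (Γ : group) (A B : gring Γ) (F : gfunctor A B) (G : gfunctor B A).
Variables (eta : forall M : gmod A, ghom (G (F M)) M) (eta' : forall N : gmod B, ghom (F (G N)) N).
Hypotheses (Hi : forall M, is_iso (eta M))
  (Hn : forall (M N : gmod A) (f : ghom M N),
       hcomp (eta N) (fhom G (fhom F f)) = hcomp f (eta M))
  (Hi' : forall N, is_iso (eta' N))
  (Hn' : forall (M N : gmod B) (f : ghom M N),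
       hcomp (eta' N) (fhom F (fhom G f)) = hcomp f (eta' M)).
Hypotheses (idA : idempotent_ring A) (idB : idempotent_ring B).

Lemma injF X Y (β : ghom X Y) : injective β -> injective (fhom F β).
Proof. exact: (inj_pres Hi Hn Hi' Hn' idB). Qed.
Lemma injG X Y (β : ghom X Y) : injective β -> injective (fhom G β).
Proof. exact: (inj_pres (F:=G) (G:=F) Hi' Hn' Hi Hn idA). Qed.

Lemma Fwd (S : gmod A) (Q : gmod B) (γ : ghom Q (F S)) (X : gmod A) (α : ghom X S) :
  injective γ -> (forall x, exists q, fhom F α x = γ q) ->
  forall x, exists w, α x = eta S (fhom G γ w).
Proof.
move=> gi H; case: (factor gi H) => k Hk.
have E : fhom F α = hcomp γ k by apply: ghom_ext.
move=> x; case: (iso_surj (Hi X) x) => z <-; exists (fhom G k z).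
by rewrite -(natpt Hn) E fhom_comp.
Qed.

Lemma Rback (S : gmod A) (Q : gmod B) (γ : ghom Q (F S)) (X : gmod A) (α : ghom X S) :
  injective γ -> (forall x, exists w, α x = eta S (fhom G γ w)) ->
  forall x, exists q, fhom F α x = γ q.
Proof.
move=> gi H.
have H1 : forall z, exists w, fhom G (fhom F α) z = fhom G γ w.
  move=> z; case: (H (eta X z)) => w e; exists w; apply: (iso_inj (Hi S)).
  by rewrite (natpt Hn) e.
have H2 := F_im (F:=F) (injG gi) H1.
move=> x; case: (iso_surj (Hi' (F X)) x) => u <-; case: (H2 u) => v e.
exists (eta' Q v).
by rewrite -(natpt' Hn') e (natpt' Hn').
Qed.

Lemma simple_transfer (S X : gmod A) (ι : ghom X S) (N : S -> Prop) :
  injective ι -> gr_simple_sub N -> (forall y, im ι y -> N y) -> (forall y, N y -> im ι y) ->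
  gr_simple_sub (im (fhom F ι)).
Proof.
move=> ii HN e1 e2; split.
  case: HN => [[x [Nx nx]] _]; case: (e2 x Nx) => x' ex.
  have nx' : exists z : X, z <> 0.
    by exists x' => h; apply: nx; rewrite -ex h hfun0.
  case: (nonzero_pres Hi nx') => y ny; exists (fhom F ι y); split; first by exists y.
  by move=> h; apply: ny; apply: (injF ii); rewrite h hfun0.
move=> P HP Psub.
case: (classic (forall x, P x -> x = 0)) => [hz|hz]; [by left | right].
have [p [Pp np]] : exists p, P p /\ p <> 0.
  apply: NNPP => H; apply: hz => x Px; apply: NNPP => nx; apply: H; by exists x.
pose HU := AP_unital idB (P:=P).
pose γ := incl (AP_submod P) HU.
have gi : injective γ := @incl_inj _ _ _ _ (AP_submod P) HU.
have gP : forall q, P (γ q).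
  move=> q; apply: (AP_subP HP); apply/(incl_im (AP_submod P) HU); by exists q.
have gsub : forall q, exists x, γ q = fhom F ι x.
  move=> q; case: (Psub _ (gP q)) => x e; by exists x.
case: (factor (injF ii) gsub) => k Hk.
have Eg : γ = hcomp (fhom F ι) k by apply: ghom_ext.
pose h := hcomp (eta S) (fhom G γ).
have hN : forall s, im h s -> N s.
  move=> _ [w <-]; apply: e1; rewrite /h /= Eg fhom_comp /= (natpt Hn).
  by eexists.
have hnz : exists s, im h s /\ s <> 0.
  case: (AP_nonzero HP Pp np) => y [Ay ny].
  case: (proj2 (incl_im (AP_submod P) HU y) Ay) => q Eq.
  have nQ : exists q0 : subM (AP_submod P) HU, q0 <> 0.
    by exists q => e; apply: ny; rewrite -Eq e hfun0.
  case: (nonzero_pres (F:=G) Hi' nQ) => w nw.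
  exists (h w); split; first by exists w.
  move=> e; apply: nw; apply: (injG gi); apply: (iso_inj (Hi S)).
  by rewrite hfun0 hfun0.
case: HN => _ Hs; case: (Hs (im h) (im_submod h) hN) => [Z|All].
  by exfalso; case: hnz => s [hs ns]; apply: ns; apply: Z.
move=> _ [x <-].
have H1 : forall x, exists w, ι x = eta S (fhom G γ w).
  move=> x0; case: (All (ι x0) (e1 _ (ex_intro _ x0 erefl))) => w e; by exists w.
case: (Rback gi H1 x) => q ->; exact: gP.
Qed.

End Main.

Section SumP.
Variables (Γ : group) (A : gring Γ) (M : gmod A) (I : Type).
Definition SumP (Nf : I -> M -> Prop) (J : I -> Prop) (y : M) :=
  exists s : seq (I * M),
    List.Forall (fun p => J p.1 /\ Nf p.1 p.2) s /\ y = \sum_(p <- s) p.2.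
Lemma SumP_in Nf J i y : J i -> Nf i y -> SumP Nf J y.
Proof.
move=> Ji Ny; exists [:: (i, y)]; rewrite big_seq1; split => //.
by constructor; [split | constructor].
Qed.
Lemma SumP_le Nf J (H : M -> Prop) : gr_submod H ->
  (forall i y, J i -> Nf i y -> H y) -> forall y, SumP Nf J y -> H y.
Proof.
case=> H0 HD _ _ _ Hle y [s [Hs ->]].
apply: (Forall_sum (f := fun p => p.2) H0 HD Hs) => p [Jp Np]; exact: Hle Jp Np.
Qed.
Lemma SumP_submod Nf J : (forall i, gr_submod (Nf i)) -> gr_submod (SumP Nf J).
Proof.
move=> HN; split.
- by exists [::]; rewrite big_nil.
- move=> _ _ [s1 [H1 ->]] [s2 [H2 ->]]; exists (s1 ++ s2); split; first exact: Forall_cat.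
  by rewrite big_cat.
- move=> _ [s [Hs ->]]; exists (map (fun p => (p.1, - p.2)) s); split.
    apply: Forall_map Hs => p [Jp Np]; split => //=.
    by case: (HN p.1) => _ _ HNN _ _; apply: HNN.
  by rewrite big_map sumrN.
- move=> a _ [s [Hs ->]]; exists (map (fun p => (p.1, act a p.2)) s); split.
    apply: Forall_map Hs => p [Jp Np]; split => //=.
    by case: (HN p.1) => _ _ _ HNA _; apply: HNA.
  by rewrite big_map act_sumr.
- move=> g _ [s [Hs ->]]; exists (map (fun p => (p.1, mpi g p.2)) s); split.
    apply: Forall_map Hs => p [Jp Np]; split => //=.
    by case: (HN p.1) => _ _ _ _ HNM; apply: HNM.
  by rewrite big_map mpi_sum.
Qed.
End SumP.

Lemma submod_and Γ (A : gring Γ) (M : gmod A) (P Q : M -> Prop) :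
  gr_submod P -> gr_submod Q -> gr_submod (fun x => P x /\ Q x).
Proof.
case=> P0 PD PN PA PM [Q0 QD QN QA QM]; split.
- by [].
- by move=> x y [? ?] [? ?]; split; [apply: PD | apply: QD].
- by move=> x [? ?]; split; [apply: PN | apply: QN].
- by move=> a x [? ?]; split; [apply: PA | apply: QA].
- by move=> g x [? ?]; split; [apply: PM | apply: QM].
Qed.

Theorem corollary7p2 (Γ : group) (A B : gring Γ)
  (idA : idempotent_ring A) (tfA : torsionfree_ring A)
  (idB : idempotent_ring B) (tfB : torsionfree_ring B)
  (F : gfunctor A B) (G : gfunctor B A)
  (grF : graded_functor F) (grG : graded_functor G)
  (eqFG : inverse_equivalences F G)
  (S : gmod A) :
  (gr_simple S -> gr_simple (F S)) /\ (gr_semisimple S -> gr_semisimple (F S)).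
Proof.
case: eqFG => [[eta [Hi Hn]] [eta' [Hi' Hn']]].
split.
  move=> HS.
  have := @simple_transfer _ _ _ F G eta eta' Hi Hn Hi' Hn' idA idB S S (hid S)
    (fun _ => True) (fun x y e => e) HS (fun _ _ => I) (fun y _ => ex_intro _ y erefl).
  rewrite fhom_id => -[Hnz Hsub]; split.
    by case: Hnz => x [_ nx]; exists x.
  move=> P HP _; case: (Hsub P HP (fun x _ => ex_intro _ x erefl)) => [h|h]; [left|right] => //.
  by move=> x _; apply: h; exists x.
case=> I [N [HN [Hspan Hind]]].
have HNs i : gr_submod (N i) := (HN i).1.
have HNsim i : gr_simple_sub (N i) := (HN i).2.
pose HU i := AP_unital idA (P := N i).
pose ι i := incl (AP_submod (N i)) (HU i).
have ιi i : injective (ι i) := @incl_inj _ _ _ _ (AP_submod (N i)) (HU i).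
have imι i y : im (ι i) y <-> AP (N i) y := incl_im (AP_submod (N i)) (HU i) y.
have NAP i y : N i y -> AP (N i) y.
  case: (HNsim i) => [[x [Nx nx]] Hs].
  case: (Hs (AP (N i)) (AP_submod _) (fun z h => AP_subP (HNs i) h)) => [Z|All].
    by exfalso; case: (AP_nonzero (HNs i) Nx nx) => z [Az nz]; exact: nz (Z z Az).
  by apply: All.
pose N' i := im (fhom F (ι i)).
have simpN' i : gr_simple_sub (N' i).
  apply: (@simple_transfer _ _ _ F G eta eta' Hi Hn Hi' Hn' idA idB S _ (ι i) (N i) (ιi i) (HNsim i)).
    by move=> y hy; apply: (AP_subP (HNs i)); apply/imι.
  by move=> y hy; apply/imι; apply: NAP.
exists I, N'; split; [|split].
- by move=> i; split; [exact: im_submod | exact: simpN'].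
- pose T := SumP N' (fun _ => True).
  have HT : gr_submod T by apply: SumP_submod => i; exact: im_submod.
  pose HUT := AP_unital idB (P := T).
  pose γ := incl (AP_submod T) HUT.
  have gi : injective γ := @incl_inj _ _ _ _ (AP_submod T) HUT.
  have key : forall x : S, exists w, hid S x = eta S (fhom G γ w).
    move=> x; case: (Hspan x) => s [Hs ->].
    pose h := hcomp (eta S) (fhom G γ).
    suff : im h (\sum_(p <- s) p.2) by case=> w <-; exists w.
    case: (im_submod h) => H0 HD _ _ _.
    apply: (Forall_sum (f := fun p => p.2) H0 HD Hs) => p Np.
    case: (proj2 (imι p.1 p.2) (NAP _ _ Np)) => q <-.
    have Hq : forall q0, exists q', fhom F (ι p.1) q0 = γ q'.
      move=> q0.
      have : AP T (fhom F (ι p.1) q0).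
        apply: (im_AP HT (f := fhom F (ι p.1))); last by exists q0.
        by move=> y hy; exact: (@SumP_in _ _ _ _ N' (fun _ => True) p.1 y Logic.I hy).
      by move/(incl_im (AP_submod T) HUT) => [q' e]; exists q'.
    case: (Fwd Hi Hn gi Hq q) => w e; by exists w.
  have R := @Rback _ _ _ F G eta eta' Hi Hn Hi' Hn' idA S _ γ S (hid S) gi key.
  rewrite fhom_id in R.
  move=> y; case: (R y) => q /= e.
  have : T y.
    apply: (AP_subP HT); apply/(incl_im (AP_submod T) HUT); by exists q.
  case=> s [Hs Ey]; exists s; split => //.
  by apply: Forall_impl' Hs => p [].
- move=> i y Ny [s [Hs Ey]].
  pose Pint := fun z => N' i z /\ SumP N' (fun j => j <> i) z.
  have HPint : gr_submod Pint.
    apply: submod_and; first exact: im_submod.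
    by apply: SumP_submod => j; exact: im_submod.
  case: (simpN' i) => _ Hs'.
  case: (Hs' Pint HPint (fun z h => h.1)) => [Z|All].
    by apply: Z; split => //; exists s.
  exfalso.
  pose W := SumP N (fun j => j <> i).
  have HW : gr_submod W by apply: SumP_submod.
  pose HUW := AP_unital idA (P := W).
  pose ιW := incl (AP_submod W) HUW.
  have Wi : injective ιW := @incl_inj _ _ _ _ (AP_submod W) HUW.
  have step1 j : j <> i -> forall q, exists q', ι j q = ιW q'.
    move=> ne q.
    have : AP W (ι j q).
      apply: (AP_mono (P := N j)); first by move=> z Nz; exact: (@SumP_in _ _ _ _ N (fun j => j <> i) j z ne Nz).
      by apply/imι; exists q.
    by move/(incl_im (AP_submod W) HUW) => [q' e]; exists q'.
  have step2 j : j <> i -> forall z, N' j z -> im (fhom F ιW) z.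
    move=> ne _ [q <-]; case: (F_im (F:=F) Wi (step1 j ne) q) => q' e.
    by exists q'.
  have step3 : forall z, N' i z -> im (fhom F ιW) z.
    move=> z Nz; case: (All z Nz) => _ Sz.
    by apply: (SumP_le (im_submod _) _ Sz) => j z' ne Nz'; apply: (step2 j ne).
  have step4 : forall q, exists q', fhom F (ι i) q = fhom F ιW q'.
    move=> q; case: (step3 _ (ex_intro _ q erefl)) => q' e; by exists q'.
  case: (HNsim i) => [[x [Nx nx]] _].
  case: (proj2 (imι i x) (NAP _ _ Nx)) => q Eq.
  case: (Fwd Hi Hn (injF Hi Hn Hi' Hn' idB Wi) step4 q) => w e.
  rewrite (natpt Hn) Eq in e.
  have Wx : W x.
    apply: (AP_subP HW); apply/(incl_im (AP_submod W) HUW); by exists (eta _ w).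
  by apply: nx; apply: (Hind i x Nx Wx).
Qed.
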